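(* Let $(G,D,\star)$ be a probabilistic metric space such that $\star$ is sup-continuous, let $A$ be a nonempty subset of $G$, and let $f:A\to\Delta^+$ be a probabilistic $1$-Lipschitz map (i.e. $D(x,y)\star f(y)\le f(x)$ for all $x,y\in A$). Then there exists a probabilistic $1$-Lipschitz map $\tilde f:G\to\Delta^+$ with $\tilde f|_A=f$.
   Context: A distribution function is a nondecreasing, left-continuous function $F:[-\infty,+\infty]\to[0,1]$ with $F(-\infty)=0$, $F(+\infty)=1$; $\Delta^+$ is the set of distribution functions with $F(0)=0$, ordered pointwise; $(\Delta^+,\le)$ is a complete lattice with maximum $\mathcal H_0$ ($\mathcal H_0(t)=0$ for $t\le0$, $1$ for $t>0$). A triangle function is a binary operation $\star$ on $\Delta^+$ that is commutative, associative, nondecreasing in each argument, with $F\star\mathcal H_0=F$. It is sup-continuous if $\sup_{i\in I}(F_i\star L)=(\sup_{i\in I}F_i)\star L$ for every nonempty family $(F_i)_{i\in I}\subset\Delta^+$ and every $L\in\Delta^+$. A probabilistic metric space $(G,D,\star)$ consists of a set $G$, a triangle function $\star$ and $D:G\times G\to\Delta^+$ with (i) $D(p,q)=\mathcal H_0$ iff $p=q$; (ii) $D(p,q)=D(q,p)$; (iii) $D(p,q)\star D(q,r)\le D(p,r)$. A map $f:G\to\Delta^+$ is probabilistic $1$-Lipschitz if $D(x,y)\star f(y)\le f(x)$ for all $x,y\in G$. *)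

(* Defs.v *)
From Stdlib Require Import Reals Lra.
Open Scope R_scope.

(* A distribution function F : [-oo,+oo] -> [0,1] is represented by its
   restriction to R; the values F(-oo)=0 and F(+oo)=1 are fixed and implicit. *)
Record Dplus : Type := mkDplus {
  dfun :> R -> R;
  dfun_range : forall t, 0 <= dfun t <= 1;
  dfun_mono : forall s t, s <= t -> dfun s <= dfun t;
  dfun_lcont : forall t eps, 0 < eps ->
      exists delta, 0 < delta /\
        forall s, t - delta < s < t -> Rabs (dfun s - dfun t) < eps;
  dfun_zero : dfun 0 = 0
}.

(* pointwise order (values at -oo, +oo coincide for all elements) *)
Definition dle (F G : Dplus) : Prop := forall t, F t <= G t.

Definition H0fun (t : R) : R := if Rle_dec t 0 then 0 else 1.

Lemma H0_range : forall t, 0 <= H0fun t <= 1.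
Proof. intro t; unfold H0fun; destruct (Rle_dec t 0); lra. Qed.

Lemma H0_mono : forall s t, s <= t -> H0fun s <= H0fun t.
Proof.
  intros s t H; unfold H0fun; destruct (Rle_dec s 0); destruct (Rle_dec t 0); lra.
Qed.

Lemma H0_lcont : forall t eps, 0 < eps ->
  exists delta, 0 < delta /\
    forall s, t - delta < s < t -> Rabs (H0fun s - H0fun t) < eps.
Proof.
  intros t eps He. destruct (Rle_dec t 0) as [Ht|Ht].
  - exists 1; split; [lra|]. intros s Hs; unfold H0fun.
    destruct (Rle_dec s 0); destruct (Rle_dec t 0); try lra.
    replace (0 - 0) with 0 by lra. rewrite Rabs_R0; lra.
  - exists t; split; [lra|]. intros s Hs; unfold H0fun.
    destruct (Rle_dec s 0); destruct (Rle_dec t 0); try lra.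
    replace (1 - 1) with 0 by lra. rewrite Rabs_R0; lra.
Qed.

Lemma H0_zero : H0fun 0 = 0.
Proof. unfold H0fun; destruct (Rle_dec 0 0); lra. Qed.

Definition H0 : Dplus := mkDplus H0fun H0_range H0_mono H0_lcont H0_zero.

Definition is_sup {I : Type} (F : I -> Dplus) (S : Dplus) : Prop :=
  (forall i, dle (F i) S) /\
  (forall U : Dplus, (forall i, dle (F i) U) -> dle S U).

Definition triangle_function (star : Dplus -> Dplus -> Dplus) : Prop :=
  (forall F G, star F G = star G F) /\
  (forall F G K, star F (star G K) = star (star F G) K) /\
  (forall F F' G, dle F F' -> dle (star F G) (star F' G)) /\
  (forall F G G', dle G G' -> dle (star F G) (star F G')) /\
  (forall F, star F H0 = F).

Definition sup_continuous (star : Dplus -> Dplus -> Dplus) : Prop :=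
  forall (I : Type) (F : I -> Dplus) (S L : Dplus),
    inhabited I -> is_sup F S -> is_sup (fun i => star (F i) L) (star S L).

Definition PM_space {G : Type} (D : G -> G -> Dplus)
  (star : Dplus -> Dplus -> Dplus) : Prop :=
  triangle_function star /\
  (forall p q, D p q = H0 <-> p = q) /\
  (forall p q, D p q = D q p) /\
  (forall p q r, dle (star (D p q) (D q r)) (D p r)).

Definition prob_lipschitz_on {G : Type} (D : G -> G -> Dplus)
  (star : Dplus -> Dplus -> Dplus) (P : G -> Prop) (f : G -> Dplus) : Prop :=
  forall x y, P x -> P y -> dle (star (D x y) (f y)) (f x).

(* Main.v *)
Require Import Defs.
From Stdlib Require Import Reals Lra ProofIrrelevance FunctionalExtensionality.
Open Scope R_scope.

Section SupC.
Variable I : Type.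
Variable F : I -> Dplus.
Hypothesis HI : inhabited I.

Definition Eset (t : R) : R -> Prop := fun r => exists i, r = F i t.

Lemma Eset_bound t : bound (Eset t).
Proof. exists 1. intros r [i ->]. apply dfun_range. Qed.

Lemma Eset_ne t : exists r, Eset t r.
Proof. destruct HI as [i]. exists (F i t). exists i; reflexivity. Qed.

Definition Sfun (t : R) : R := proj1_sig (completeness (Eset t) (Eset_bound t) (Eset_ne t)).

Lemma Sfun_lub t : is_lub (Eset t) (Sfun t).
Proof. unfold Sfun. destruct (completeness _ _ _) as [m Hm]; exact Hm. Qed.

Lemma Sfun_ge i t : F i t <= Sfun t.
Proof. destruct (Sfun_lub t) as [H _]. apply H. exists i; reflexivity. Qed.

Lemma Sfun_le t u : (forall i, F i t <= u) -> Sfun t <= u.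
Proof. intro H. destruct (Sfun_lub t) as [_ H2]. apply H2. intros r [i ->]; apply H. Qed.

Lemma Sfun_range t : 0 <= Sfun t <= 1.
Proof.
  destruct HI as [i]. split.
  - pose proof (dfun_range (F i) t). pose proof (Sfun_ge i t). lra.
  - apply Sfun_le. intro j; apply dfun_range.
Qed.

Lemma Sfun_mono s t : s <= t -> Sfun s <= Sfun t.
Proof.
  intro H. apply Sfun_le. intro i. pose proof (dfun_mono (F i) s t H).
  pose proof (Sfun_ge i t). lra.
Qed.

Lemma Sfun_zero : Sfun 0 = 0.
Proof.
  pose proof (Sfun_range 0).
  assert (Sfun 0 <= 0) by (apply Sfun_le; intro i; rewrite dfun_zero; lra). lra.
Qed.

Lemma Sfun_lcont t eps : 0 < eps ->
  exists delta, 0 < delta /\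
    forall s, t - delta < s < t -> Rabs (Sfun s - Sfun t) < eps.
Proof.
  intro He.
  assert (Hex : exists i, Sfun t - eps/2 < F i t).
  { apply Classical_Prop.NNPP. intro Hn.
    assert (Sfun t <= Sfun t - eps/2).
    { apply Sfun_le. intro i. apply Rnot_lt_le. intro Hc. apply Hn. exists i; exact Hc. }
    lra. }
  destruct Hex as [i Hi].
  destruct (dfun_lcont (F i) t (eps/2)) as [d [Hd Hd2]]; [lra|].
  exists d; split; [exact Hd|]. intros s Hs.
  specialize (Hd2 s Hs). pose proof (Sfun_mono s t ltac:(lra)).
  pose proof (Sfun_ge i s).
  apply Rabs_def2 in Hd2. destruct Hd2.
  apply Rabs_def1; lra.
Qed.

Definition Ssup : Dplus := mkDplus Sfun Sfun_range Sfun_mono Sfun_lcont Sfun_zero.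

Lemma Ssup_is_sup : is_sup F Ssup.
Proof.
  split.
  - intros i t. apply Sfun_ge.
  - intros U HU t. apply Sfun_le. intro i; apply HU.
Qed.
End SupC.

Lemma Dplus_eq (F G : Dplus) : dle F G -> dle G F -> F = G.
Proof.
  intros H1 H2. unfold dle in *. destruct F as [f r m l z], G as [g r' m' l' z']. simpl in *.
  assert (f = g). { apply functional_extensionality. intro t. specialize (H1 t); specialize (H2 t); lra. }
  subst g. f_equal; apply proof_irrelevance.
Qed.

Lemma dle_trans F G K : dle F G -> dle G K -> dle F K.
Proof. intros H1 H2 t. specialize (H1 t); specialize (H2 t); lra. Qed.

Theorem mainTheorem4 (G : Type) (D : G -> G -> Dplus)
  (star : Dplus -> Dplus -> Dplus)
  (HPM : PM_space D star) (Hsup : sup_continuous star)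
  (A : G -> Prop) (HA : exists a, A a)
  (f : {x : G | A x} -> Dplus)
  (Hf : forall (x y : {x : G | A x}),
          dle (star (D (proj1_sig x) (proj1_sig y)) (f y)) (f x)) :
  exists ft : G -> Dplus,
    prob_lipschitz_on D star (fun _ => True) ft /\
    (forall x : {x : G | A x}, ft (proj1_sig x) = f x).
Proof.
  destruct HPM as [[Hc [Ha [Hm1 [Hm2 Hu]]]] [Hd [Hs Ht]]].
  assert (HI : inhabited {x : G | A x}).
  { destruct HA as [a Ha']. exact (inhabits (exist _ a Ha')). }
  set (fam := fun x (a : {x : G | A x}) => star (D x (proj1_sig a)) (f a)).
  exists (fun x => Ssup _ (fam x) HI). split.
  - intros x y _ _.
    rewrite Hc.
    destruct (Hsup _ (fam y) (Ssup _ (fam y) HI) (D x y) HI (Ssup_is_sup _ _ HI)) as [_ Hl].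
    apply Hl. intro a.
    apply dle_trans with (fam x a); [| apply (Ssup_is_sup _ _ HI)].
    unfold fam. rewrite Hc, Ha. apply Hm1. apply Ht.
  - intro x. apply Dplus_eq.
    + apply (Ssup_is_sup _ _ HI). intro a. apply Hf.
    + apply dle_trans with (fam (proj1_sig x) x); [| apply (Ssup_is_sup _ _ HI)].
      unfold fam. assert (D (proj1_sig x) (proj1_sig x) = H0) by (apply Hd; reflexivity).
      rewrite H, Hc, Hu. intro t; lra.
Qed.
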